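(* Let $(Y,\nu,S)$ be a mixing Gibbs system with $Y\subseteq A^{\mathbb{Z}}$, and let $\mathcal{P}$ be the time-zero partition of $Y$ (by the value of the coordinate $y_0$). Then for every integer $p\ge0$, \[\sup_{N\ge1}\mathrm{I}_\nu\big(\mathcal{P}^{[-p;N+p)};\mathcal{P}^{[-N-p;p)}\big)<\infty.\]
   Context: A mixing Gibbs system: $A$ finite, $Y\subseteq A^{\mathbb{Z}}$ a topologically mixing subshift of finite type, $S$ the left shift, and $\nu$ the Gibbs measure associated to a Hölder continuous potential on $Y$ (Hölder w.r.t. $d(a,a')=\sum_n2^{-|n|}1_{\{a_n\ne a'_n\}}$). For $F\subseteq\mathbb{Z}$ finite, $\mathcal{P}^F=\bigvee_{n\in F}S^{-n}\mathcal{P}$; $[a;b)=\{a,\dots,b-1\}$. $\mathrm{I}_\nu$ denotes mutual information of partitions. *)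

(* Defs.v *)
From Stdlib Require Import Reals Lra Lia ZArith Arith List.
Import ListNotations.
Open Scope R_scope.

(* The finite alphabet A is {0,...,k-1} (symbols are nats < k).
   A configuration is a map Z -> nat. *)
Definition config := Z -> nat.

Definition shiftn (j : nat) (y : config) : config := fun n => y (n + Z.of_nat j)%Z.

Definition matches (y : config) (a : Z) (w : list nat) : Prop :=
  forall j : nat, (j < length w)%nat -> y (a + Z.of_nat j)%Z = nth j w 0%nat.

Definition SFT (k : nat) (forb : list (list nat)) (y : config) : Prop :=
  (forall n, (y n < k)%nat) /\
  forall (n : Z) (w : list nat), In w forb -> ~ matches y n w.

(* topological mixing, tested on the basis of cylinder sets *)
Definition top_mixing (Y : config -> Prop) : Prop :=
  forall u v : list nat,
    (exists y, Y y /\ matches y 0 u) ->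
    (exists y, Y y /\ matches y 0 v) ->
    exists M : nat, forall n : nat, (M <= n)%nat ->
      exists y, Y y /\ matches y 0 u /\ matches y (Z.of_nat n) v.

Definition lsum {T} (f : T -> R) (l : list T) : R := fold_right Rplus 0 (map f l).

Fixpoint words (n k : nat) : list (list nat) :=
  match n with
  | O => [[]]
  | S n' => flat_map (fun a => map (cons a) (words n' k)) (seq 0 k)
  end.

Definition dpart (y y' : config) (N : nat) : R :=
  lsum (fun i : nat =>
          let n := (Z.of_nat i - Z.of_nat N)%Z in
          (/ 2) ^ (Z.abs_nat n) * (if Nat.eqb (y n) (y' n) then 0 else 1))
       (seq 0 (2 * N + 1)).

(* phi is Hoelder continuous on Y w.r.t. d  (d y y' = lim_N dpart y y' N) *)
Definition Holder_on (Y : config -> Prop) (phi : config -> R) : Prop :=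
  exists C alpha : R, 0 < alpha /\
    forall (y y' : config) (l : R), Y y -> Y y' -> Un_cv (dpart y y') l ->
      Rabs (phi y - phi y') <= C * Rpower l alpha.

(* By Kolmogorov extension, a shift-invariant Borel probability measure nu on
   A^Z is the same thing as its cylinder function
      mu w = nu { y : y_{a+j} = w_j, j < |w| }   (independent of a),
   subject to normalisation and consistency. *)
Record inv_prob (k : nat) (mu : list nat -> R) : Prop := {
  ip_nonneg : forall w, 0 <= mu w;
  ip_one    : mu [] = 1;
  ip_right  : forall w, mu w = lsum (fun a => mu (w ++ [a])) (seq 0 k);
  ip_left   : forall w, mu w = lsum (fun a => mu (a :: w)) (seq 0 k)
}.

Definition supported_on (Y : config -> Prop) (mu : list nat -> R) : Prop :=
  forall w, ~ (exists y, Y y /\ matches y 0 w) -> mu w = 0.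

Definition init_word (y : config) (n : nat) : list nat :=
  map (fun j => y (Z.of_nat j)) (seq 0 n).

Definition birkhoff (phi : config -> R) (n : nat) (y : config) : R :=
  lsum (fun j => phi (shiftn j y)) (seq 0 n).

Definition Gibbs_for (Y : config -> Prop) (phi : config -> R) (mu : list nat -> R) : Prop :=
  exists P K : R, 0 < K /\
    forall (y : config) (n : nat), Y y -> (1 <= n)%nat ->
      / K * exp (- INR n * P + birkhoff phi n y) <= mu (init_word y n) /\
      mu (init_word y n) <= K * exp (- INR n * P + birkhoff phi n y).

Definition Gibbs_measure (k : nat) (Y : config -> Prop) (mu : list nat -> R) : Prop :=
  inv_prob k mu /\ supported_on Y mu /\
  exists phi, Holder_on Y phi /\ Gibbs_for Y phi mu.

(* Atoms of P^[a;a+m) are the cylinders {y : y_{a+j} = u_j, j<m}, u a word of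
   length m over {0..k-1}.  The measure of the intersection of the atom u of
   P^[a;a+m) and the atom v of P^[c;c+m') is the sum of the measures of the
   atoms of P^[lo;hi) (lo,hi the hull of both intervals) contained in it. *)
Definition word_atb (w : list nat) (off : nat) (u : list nat) : bool :=
  forallb (fun j => Nat.eqb (nth (off + j) w 0%nat) (nth j u 0%nat)) (seq 0 (length u)).

Definition joint (k : nat) (mu : list nat -> R) (a : Z) (u : list nat) (c : Z) (v : list nat) : R :=
  let lo := Z.min a c in
  let hi := Z.max (a + Z.of_nat (length u)) (c + Z.of_nat (length v)) in
  lsum (fun w => if andb (word_atb w (Z.to_nat (a - lo)) u) (word_atb w (Z.to_nat (c - lo)) v)
                 then mu w else 0)
       (words (Z.to_nat (hi - lo)) k).

Definition mi_term (x a b : R) : R :=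
  if Req_EM_T x 0 then 0 else x * ln (x / (a * b)).

Definition mutual_info (k : nat) (mu : list nat -> R) (a : Z) (m : nat) (c : Z) (m' : nat) : R :=
  lsum (fun u => lsum (fun v => mi_term (joint k mu a u c v) (mu u) (mu v)) (words m' k))
       (words m k).

(* Main.v *)
Require Import Defs.
From Stdlib Require Import Reals Lra Lia ZArith Arith List Classical FunctionalExtensionality.
Import ListNotations.
Open Scope R_scope.

Lemma lsum_nil {T} (f : T -> R) : lsum f [] = 0. Proof. reflexivity. Qed.
Lemma lsum_cons {T} (f : T -> R) a l : lsum f (a :: l) = f a + lsum f l. Proof. reflexivity. Qed.
Lemma lsum_app {T} (f : T -> R) l1 l2 : lsum f (l1 ++ l2) = lsum f l1 + lsum f l2.
Proof. induction l1; simpl app; [rewrite lsum_nil; lra|]. rewrite !lsum_cons, IHl1; lra. Qed.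
Lemma lsum_ext_in {T} (f g : T -> R) l : (forall x, In x l -> f x = g x) -> lsum f l = lsum g l.
Proof. induction l; intros H; [reflexivity|]. rewrite !lsum_cons, (H a (or_introl eq_refl)), IHl; [reflexivity|]. intros; apply H; simpl; auto. Qed.
Lemma lsum_le_in {T} (f g : T -> R) l : (forall x, In x l -> f x <= g x) -> lsum f l <= lsum g l.
Proof. induction l; intros H; [rewrite ?lsum_nil; simpl length; simpl INR; lra|]. rewrite !lsum_cons.
  assert (f a <= g a) by (apply H; simpl; auto).
  assert (lsum f l <= lsum g l) by (apply IHl; intros; apply H; simpl; auto). lra. Qed.
Lemma lsum_scal {T} (f : T -> R) c l : lsum (fun x => c * f x) l = c * lsum f l.
Proof. induction l; [rewrite ?lsum_nil; simpl length; simpl INR; lra|]. rewrite !lsum_cons, IHl; lra. Qed.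
Lemma lsum_const {T} c (l : list T) : lsum (fun _ => c) l = c * INR (length l).
Proof. induction l; [rewrite ?lsum_nil; simpl length; simpl INR; lra|]. rewrite lsum_cons, IHl. simpl length. rewrite S_INR; lra. Qed.
Lemma lsum_nonneg {T} (f : T -> R) l : (forall x, In x l -> 0 <= f x) -> 0 <= lsum f l.
Proof. induction l; intros H; [rewrite lsum_nil; lra|]. rewrite lsum_cons.
  assert (0 <= f a) by (apply H; simpl; auto).
  assert (0 <= lsum f l) by (apply IHl; intros; apply H; simpl; auto). lra. Qed.
Lemma lsum_map {T U} (f : U -> R) (g : T -> U) l : lsum f (map g l) = lsum (fun x => f (g x)) l.
Proof. induction l; [reflexivity|]. simpl map. rewrite !lsum_cons, IHl; auto. Qed.
Lemma lsum_flat_map {T U} (f : U -> R) (g : T -> list U) l :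
  lsum f (flat_map g l) = lsum (fun a => lsum f (g a)) l.
Proof. induction l; [reflexivity|]. simpl flat_map. rewrite lsum_app, lsum_cons, IHl; auto. Qed.

Definition ldec := list_eq_dec Nat.eq_dec.

Lemma lsum_count (l : list (list nat)) w0 c :
  lsum (fun w => if ldec w w0 then c else 0) l = c * INR (count_occ ldec l w0).
Proof. induction l; [rewrite ?lsum_nil; simpl length; simpl INR; lra|]. rewrite lsum_cons, IHl. simpl count_occ.
  destruct (ldec a w0); [rewrite S_INR|]; lra. Qed.

Lemma words_split (f : list nat -> R) n m k :
  lsum f (words (n + m) k) = lsum (fun x => lsum (fun y => f (x ++ y)) (words m k)) (words n k).
Proof. revert f. induction n; intros f.
  - simpl plus. simpl words. rewrite lsum_cons, lsum_nil. simpl app. rewrite Rplus_0_r. reflexivity.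
  - simpl words. rewrite !lsum_flat_map. apply lsum_ext_in; intros a _.
    rewrite !lsum_map. rewrite IHn. reflexivity. Qed.

Lemma words_length n k w : In w (words n k) -> length w = n.
Proof. revert w; induction n; intros w H; simpl in H.
  - destruct H as [<-|[]]; reflexivity.
  - apply in_flat_map in H. destruct H as [a [_ H]]. apply in_map_iff in H.
    destruct H as [x [<- Hx]]. simpl. f_equal. auto. Qed.

Lemma count_map_cons a (W : list (list nat)) w0 :
  count_occ ldec (map (cons a) W) w0 =
  match w0 with [] => 0%nat | b :: w' => if Nat.eq_dec a b then count_occ ldec W w' else 0%nat end.
Proof. induction W; simpl.
  - destruct w0; [|destruct Nat.eq_dec]; reflexivity.
  - rewrite IHW. destruct w0 as [|b w'].
    + destruct (ldec (a :: a0) []); [discriminate|reflexivity].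
    + destruct (Nat.eq_dec a b) as [->|Hne].
      * destruct (ldec (b :: a0) (b :: w')) as [E|E]; destruct (ldec a0 w') as [E'|E'];
          try reflexivity; try congruence.
      * destruct (ldec (a :: a0) (b :: w')) as [E|E]; [congruence|reflexivity].
Qed.

Lemma count_fm_gt (W : list (list nat)) s len b w' : (b < s)%nat ->
  count_occ ldec (flat_map (fun a => map (cons a) W) (seq s len)) (b :: w') = 0%nat.
Proof. revert s; induction len; intros s Hs; [reflexivity|].
  simpl. rewrite count_occ_app, count_map_cons, IHlen by lia.
  destruct Nat.eq_dec; [lia|reflexivity]. Qed.

Lemma count_fm (W : list (list nat)) s len w0 :
  (forall w, (count_occ ldec W w <= 1)%nat) ->
  (count_occ ldec (flat_map (fun a => map (cons a) W) (seq s len)) w0 <= 1)%nat.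
Proof. intros HW. revert s; induction len; intros s; [simpl; lia|].
  simpl. rewrite count_occ_app, count_map_cons.
  destruct w0 as [|b w']; [specialize (IHlen (S s)); simpl in *; lia|].
  destruct (Nat.eq_dec s b) as [->|Hne].
  - rewrite count_fm_gt by lia. specialize (HW w'); lia.
  - apply IHlen. Qed.

Lemma words_count n k w0 : (count_occ ldec (words n k) w0 <= 1)%nat.
Proof. revert w0; induction n; intros w0.
  - simpl words. destruct w0; simpl; lia.
  - simpl words. apply count_fm. auto. Qed.

Lemma words_sum k mu n : inv_prob k mu -> lsum mu (words n k) = 1.
Proof. intros Hm. induction n.
  - simpl. rewrite lsum_cons, lsum_nil, (ip_one _ _ Hm). lra.
  - replace (S n) with (n + 1)%nat by lia. rewrite words_split.
    rewrite <- IHn. apply lsum_ext_in; intros x _. rewrite (ip_right _ _ Hm x).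
    simpl words. rewrite lsum_flat_map. apply lsum_ext_in; intros a _.
    simpl. rewrite lsum_cons, lsum_nil. lra. Qed.
Lemma ln_le_xm1 t : 0 < t -> ln t <= t - 1.
Proof. intros Ht. pose proof (exp_ineq1_le (ln t)). rewrite exp_ln in H by lra. lra. Qed.

Lemma ln_le_mono a b : 0 < a -> a <= b -> ln a <= ln b.
Proof. intros Ha Hab. destruct (Req_dec a b) as [->|Hn]; [lra|].
  left. apply ln_increasing; lra. Qed.

Lemma div_le_aux K a b : 0 < K -> a / K <= b -> a <= K * b.
Proof. intros HK H. replace a with (K * (a/K)) by (field; lra). apply Rmult_le_compat_l; lra. Qed.

Lemma real_bound (K x U V L Md Rr e1 e2 e3 : R) :
  1 <= K -> 0 < e1 -> 0 < e2 -> 0 < e3 -> 0 <= x ->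
  x <= K*(e1*e2*e3) -> Md <= K*e2 -> e1*e2/K <= V -> e2*e3/K <= U ->
  e1/K <= L -> e2/K <= Md -> e3/K <= Rr ->
  mi_term x U V <= K^8 * L * Rr.
Proof.
  intros HK H1 H2 H3 Hx Hxb HMd HV HU HL HMl HR.
  assert (HKp : 0 < K) by lra.
  assert (Lp : 0 < L). { apply Rlt_le_trans with (e1/K); auto. apply Rdiv_lt_0_compat; lra. }
  assert (Rp : 0 < Rr). { apply Rlt_le_trans with (e3/K); auto. apply Rdiv_lt_0_compat; lra. }
  assert (Mp : 0 < Md). { apply Rlt_le_trans with (e2/K); auto. apply Rdiv_lt_0_compat; lra. }
  assert (Vp : 0 < V). { apply Rlt_le_trans with (e1*e2/K); auto. apply Rdiv_lt_0_compat; nra. }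
  assert (Up : 0 < U). { apply Rlt_le_trans with (e2*e3/K); auto. apply Rdiv_lt_0_compat; nra. }
  assert (K4p : 0 < K^4) by (apply pow_lt; lra).
  assert (RHS0 : 0 <= K^8 * L * Rr) by (assert (0 < K^8) by (apply pow_lt; lra); apply Rmult_le_pos; [apply Rmult_le_pos|]; lra).
  unfold mi_term. destruct (Req_EM_T x 0) as [_|Hx0]; [exact RHS0|].
  assert (Hxp : 0 < x) by lra.
  assert (HV' : e1*e2 <= K*V) by (apply div_le_aux; auto).
  assert (HU' : e2*e3 <= K*U) by (apply div_le_aux; auto).
  assert (HL' : e1 <= K*L) by (apply div_le_aux; auto).
  assert (HM' : e2 <= K*Md) by (apply div_le_aux; auto).
  assert (HR' : e3 <= K*Rr) by (apply div_le_aux; auto).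
  assert (Hprod : x * Md <= K^4 * (U * V)).
  { apply Rle_trans with ((K*(e1*e2*e3)) * (K*e2)).
    - apply Rmult_le_compat; lra.
    - replace (K * (e1 * e2 * e3) * (K * e2)) with (K*K*((e1*e2)*(e2*e3))) by ring.
      replace (K^4 * (U*V)) with (K*K*((K*V)*(K*U))) by ring.
      apply Rmult_le_compat_l; [nra|]. apply Rmult_le_compat; nra. }
  assert (Hx3 : x <= K^4 * (L * Md * Rr)).
  { apply Rle_trans with (K*(e1*e2*e3)); auto.
    replace (K^4 * (L*Md*Rr)) with (K*((K*L)*(K*Md)*(K*Rr))) by ring.
    apply Rmult_le_compat_l; [lra|]. apply Rmult_le_compat; [nra|nra| |nra].
    apply Rmult_le_compat; nra. }
  assert (Hq : x / (U*V) <= K^4 / Md).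
  { unfold Rdiv. apply Rmult_le_reg_r with (U*V*Md); [repeat apply Rmult_lt_0_compat; lra|].
    replace (x * / (U * V) * (U * V * Md)) with (x*Md) by (field; lra).
    replace (K ^ 4 * / Md * (U * V * Md)) with (K^4*(U*V)) by (field; lra). exact Hprod. }
  assert (Hln : ln (x / (U*V)) <= ln (K^4 / Md)).
  { apply ln_le_mono; auto. apply Rdiv_lt_0_compat; nra. }
  assert (Hxl : x * ln (x / (U*V)) <= x * ln (K^4/Md)) by (apply Rmult_le_compat_l; lra).
  destruct (Rle_dec (ln (K^4/Md)) 0) as [Hneg|Hpos].
  - assert (x * ln (K^4/Md) <= 0) by nra. lra.
  - apply Rnot_le_lt in Hpos.
    assert (Hz : Md * ln (K^4/Md) <= K^4).
    { pose proof (ln_le_xm1 (K^4/Md)) as Hl. assert (0 < K^4/Md) by (apply Rdiv_lt_0_compat; lra).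
      specialize (Hl H). apply Rle_trans with (Md * (K^4/Md - 1)); [apply Rmult_le_compat_l; lra|].
      replace (Md * (K ^ 4 / Md - 1)) with (K^4 - Md) by (field; lra). lra. }
    apply Rle_trans with (x * ln (K^4/Md)); auto.
    apply Rle_trans with (K^4 * (L*Md*Rr) * ln (K^4/Md)); [apply Rmult_le_compat_r; lra|].
    replace (K ^ 4 * (L * Md * Rr) * ln (K ^ 4 / Md)) with (K^4 * L * Rr * (Md * ln (K^4/Md))) by ring.
    replace (K^8 * L * Rr) with (K^4 * L * Rr * K^4) by ring.
    apply Rmult_le_compat_l; [nra|]. exact Hz.
Qed.
Lemma shift_shift j n y : shiftn j (shiftn n y) = shiftn (n + j) y.
Proof. apply functional_extensionality; intro x. unfold shiftn. f_equal. lia. Qed.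

Lemma lsum_seq_shift (f : nat -> R) s t m :
  lsum f (seq (s + t) m) = lsum (fun j => f (s + j)%nat) (seq t m).
Proof. revert t; induction m; intros t; [reflexivity|].
  simpl seq. rewrite !lsum_cons. replace (S (s + t)) with (s + S t)%nat by lia.
  rewrite IHm. reflexivity. Qed.

Lemma birkhoff_add phi n m y :
  birkhoff phi (n + m) y = birkhoff phi n y + birkhoff phi m (shiftn n y).
Proof. unfold birkhoff. rewrite seq_app, lsum_app. f_equal.
  replace (0 + n)%nat with (n + 0)%nat by lia. rewrite lsum_seq_shift.
  f_equal. apply functional_extensionality; intro j. rewrite shift_shift. reflexivity. Qed.

Definition Ew (P : R) (phi : config -> R) (n : nat) (y : config) : R :=
  exp (- INR n * P + birkhoff phi n y).

Lemma Ew_add P phi n m y : Ew P phi (n + m) y = Ew P phi n y * Ew P phi m (shiftn n y).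
Proof. unfold Ew. rewrite <- exp_plus, plus_INR, birkhoff_add. f_equal. ring. Qed.

Lemma Ew_pos P phi n y : 0 < Ew P phi n y.
Proof. apply exp_pos. Qed.

Lemma sft_shift k forb y j : SFT k forb y -> SFT k forb (shiftn j y).
Proof. intros [H1 H2]. split.
  - intros n. apply H1.
  - intros n w Hin Hm. apply (H2 (n + Z.of_nat j)%Z w Hin). intros i Hi.
    rewrite <- (Hm i Hi). unfold shiftn. f_equal. lia. Qed.

Lemma nth_init y n i d : (i < n)%nat -> nth i (init_word y n) d = y (Z.of_nat i).
Proof. intros Hi. unfold init_word.
  rewrite nth_indep with (d' := y (Z.of_nat 0)) by (rewrite length_map, length_seq; lia).
  change (y (Z.of_nat 0)) with ((fun j => y (Z.of_nat j)) 0%nat).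
  rewrite map_nth, seq_nth by lia. reflexivity. Qed.

Lemma init_shift y w j n : matches y 0 w -> (j + n <= length w)%nat ->
  init_word (shiftn j y) n = firstn n (skipn j w).
Proof. intros Hm Hl. apply nth_ext with (d := 0%nat) (d' := 0%nat).
  - unfold init_word. rewrite length_map, length_seq, length_firstn, length_skipn. lia.
  - intros i Hi. unfold init_word in Hi. rewrite length_map, length_seq in Hi.
    rewrite nth_init by lia. rewrite nth_firstn.
    destruct (Nat.ltb_spec i n); [|lia]. rewrite nth_skipn.
    unfold shiftn. rewrite <- (Hm (j + i)%nat) by lia. f_equal. lia. Qed.

Lemma support_exists k forb mu w : supported_on (SFT k forb) mu -> mu w <> 0 ->
  exists y, SFT k forb y /\ matches y 0 w.
Proof. intros Hs Hn. destruct (classic (exists y, SFT k forb y /\ matches y 0 w)) as [H|H]; auto.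
  exfalso. apply Hn, Hs, H. Qed.

Lemma atb_eq w off u : word_atb w off u = true -> (off + length u <= length w)%nat ->
  u = firstn (length u) (skipn off w).
Proof. intros H Hl. unfold word_atb in H. rewrite forallb_forall in H.
  apply nth_ext with (d := 0%nat) (d' := 0%nat).
  - rewrite length_firstn, length_skipn. lia.
  - intros i Hi. rewrite nth_firstn. destruct (Nat.ltb_spec i (length u)); [|lia].
    rewrite nth_skipn. symmetry. apply Nat.eqb_eq, H. apply in_seq. lia. Qed.
Lemma shift0 y : shiftn 0 y = y.
Proof. apply functional_extensionality; intro x. unfold shiftn. f_equal. lia. Qed.

Lemma gibbs_ext k forb mu phi P K :
  inv_prob k mu -> 0 < K ->
  (forall (y : config) (n : nat), SFT k forb y -> (1 <= n)%nat ->
      / K * exp (- INR n * P + birkhoff phi n y) <= mu (init_word y n) /\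
      mu (init_word y n) <= K * exp (- INR n * P + birkhoff phi n y)) ->
  forall y n, SFT k forb y ->
    Ew P phi n y / Rmax K 1 <= mu (init_word y n) /\ mu (init_word y n) <= Rmax K 1 * Ew P phi n y.
Proof.
  intros Hinv HK HG y n Hy.
  assert (H1 : 1 <= Rmax K 1) by apply Rmax_r.
  assert (H2 : K <= Rmax K 1) by apply Rmax_l.
  pose proof (Ew_pos P phi n y) as Hp.
  destruct n as [|n].
  - unfold Ew, init_word. simpl seq. simpl map. rewrite (ip_one _ _ Hinv).
    unfold birkhoff. simpl seq. rewrite lsum_nil. simpl INR.
    replace (- 0 * P + 0) with 0 by ring. rewrite exp_0. split.
    + unfold Rdiv. rewrite Rmult_1_l. assert (/ Rmax K 1 <= / 1) by (apply Rinv_le_contravar; lra). rewrite Rinv_1 in H; lra.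
    + lra.
  - destruct (HG y (S n) Hy) as [Hlo Hhi]; [lia|]. fold (Ew P phi (S n) y) in Hlo, Hhi.
    split.
    + apply Rle_trans with (/K * Ew P phi (S n) y); auto. unfold Rdiv.
      rewrite Rmult_comm. apply Rmult_le_compat_r; [lra|]. apply Rinv_le_contravar; lra.
    + apply Rle_trans with (K * Ew P phi (S n) y); auto. apply Rmult_le_compat_r; lra.
Qed.

Lemma joint_eq k mu p N u v :
  length u = (N + 2 * p)%nat -> length v = (N + 2 * p)%nat ->
  joint k mu (- Z.of_nat p) u (- Z.of_nat N - Z.of_nat p) v =
  lsum (fun w => if andb (word_atb w N u) (word_atb w 0 v) then mu w else 0)
       (words (N + (N + 2 * p)) k).
Proof.
  intros Hu Hv. unfold joint. cbv zeta. rewrite Hu, Hv.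
  match goal with |- context [words (Z.to_nat ?e) k] =>
    replace (Z.to_nat e) with (N + (N + 2 * p))%nat by lia end.
  match goal with |- context [word_atb _ (Z.to_nat ?e) u] =>
    replace (Z.to_nat e) with N by lia end.
  match goal with |- context [word_atb _ (Z.to_nat ?e) v] =>
    replace (Z.to_nat e) with 0%nat by lia end.
  reflexivity.
Qed.

Lemma init0 y w n : matches y 0 w -> (n <= length w)%nat -> init_word y n = firstn n w.
Proof. intros Hm Hl. rewrite <- (shift0 y). rewrite (init_shift y w 0 n Hm) by lia. reflexivity. Qed.

Lemma mi_zero a b : mi_term 0 a b = 0.
Proof. unfold mi_term. destruct (Req_EM_T 0 0); [reflexivity|lra]. Qed.

Lemma term_bound k forb mu phi P K p N u v :
  inv_prob k mu -> supported_on (SFT k forb) mu -> 0 < K ->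
  (forall (y : config) (n : nat), SFT k forb y -> (1 <= n)%nat ->
      / K * exp (- INR n * P + birkhoff phi n y) <= mu (init_word y n) /\
      mu (init_word y n) <= K * exp (- INR n * P + birkhoff phi n y)) ->
  In u (words (N + 2 * p) k) -> In v (words (N + 2 * p) k) ->
  mi_term (joint k mu (- Z.of_nat p) u (- Z.of_nat N - Z.of_nat p) v) (mu u) (mu v)
  <= (Rmax K 1) ^ 8 * mu (firstn N v) * mu (skipn (2 * p) u).
Proof.
  intros Hinv Hsupp HK HG Hu Hv.
  apply words_length in Hu. apply words_length in Hv.
  rewrite joint_eq by auto.
  pose proof (gibbs_ext k forb mu phi P K Hinv HK HG) as G.
  set (K' := Rmax K 1) in *.
  assert (HK1 : 1 <= K') by apply Rmax_r.
  assert (RHS0 : 0 <= K'^8 * mu (firstn N v) * mu (skipn (2 * p) u)).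
  { pose proof (ip_nonneg _ _ Hinv (firstn N v)). pose proof (ip_nonneg _ _ Hinv (skipn (2*p) u)).
    assert (0 < K'^8) by (apply pow_lt; lra).
    apply Rmult_le_pos; [apply Rmult_le_pos|]; lra. }
  set (w0 := v ++ skipn (2 * p) u).
  assert (Hw0len : length w0 = (N + (N + 2 * p))%nat).
  { unfold w0. rewrite length_app, length_skipn. lia. }
  assert (Hext : forall w, In w (words (N + (N + 2 * p)) k) ->
     (if andb (word_atb w N u) (word_atb w 0 v) then mu w else 0) =
     if ldec w w0 then (if andb (word_atb w0 N u) (word_atb w0 0 v) then mu w0 else 0) else 0).
  { intros w Hw. apply words_length in Hw. destruct (ldec w w0) as [->|Hne]; [reflexivity|].
    destruct (word_atb w N u) eqn:E1; destruct (word_atb w 0 v) eqn:E2; simpl; try reflexivity.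
    exfalso; apply Hne.
    apply atb_eq in E1; [|lia]. apply atb_eq in E2; [|lia].
    rewrite Hu in E1. rewrite Hv in E2. simpl skipn in E2.
    rewrite firstn_all2 in E1 by (rewrite length_skipn; lia).
    unfold w0. rewrite E1, E2, skipn_skipn.
    replace (2 * p + N)%nat with (N + 2 * p)%nat by lia. symmetry. apply firstn_skipn. }
  rewrite (lsum_ext_in _ _ _ Hext), lsum_count.
  pose proof (words_count (N + (N + 2 * p)) k w0) as Hc.
  destruct (count_occ ldec (words (N + (N + 2 * p)) k) w0) as [|[|c]] eqn:Ec; [| |lia].
  { simpl INR. rewrite Rmult_0_r, mi_zero. exact RHS0. }
  simpl INR. rewrite Rmult_1_r.
  destruct (andb (word_atb w0 N u) (word_atb w0 0 v)) eqn:Hm; [|rewrite mi_zero; exact RHS0].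
  clearbody w0. clear Hext Ec Hc.
  apply andb_prop in Hm. destruct Hm as [E1 E2].
  apply atb_eq in E1; [|lia]. apply atb_eq in E2; [|lia].
  rewrite Hu in E1. rewrite Hv in E2. simpl skipn in E2.
  rewrite firstn_all2 in E1 by (rewrite length_skipn; lia).
  subst u v. clear Hu Hv RHS0.
  destruct (Req_EM_T (mu w0) 0) as [Hz|Hnz].
  { rewrite Hz, mi_zero.
    pose proof (ip_nonneg _ _ Hinv (firstn N (firstn (N + 2 * p) w0))).
    pose proof (ip_nonneg _ _ Hinv (skipn (2 * p) (skipn N w0))).
    assert (0 < K'^8) by (apply pow_lt; lra).
    apply Rmult_le_pos; [apply Rmult_le_pos|]; lra. }
  destruct (support_exists k forb mu w0 Hsupp Hnz) as [y [Hy Hmy]].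
  assert (Hsh : shiftn (2 * p) (shiftn N y) = shiftn (N + 2 * p) y) by apply shift_shift.
  assert (W1 : init_word y (N + (2 * p + N)) = w0).
  { rewrite (init0 y w0) by (auto; lia). apply firstn_all2. lia. }
  assert (W2 : init_word y (N + 2 * p) = firstn (N + 2 * p) w0).
  { apply init0; auto; lia. }
  assert (W3 : init_word (shiftn N y) (2 * p + N) = skipn N w0).
  { rewrite (init_shift y w0) by (auto; lia). apply firstn_all2. rewrite length_skipn. lia. }
  assert (W4 : init_word y N = firstn N (firstn (N + 2 * p) w0)).
  { rewrite firstn_firstn. replace (Init.Nat.min N (N + 2 * p)) with N by lia. apply init0; auto; lia. }
  assert (W5 : init_word (shiftn N y) (2 * p) = firstn (2 * p) (skipn N w0)).
  { apply init_shift; auto; lia. }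
  assert (W6 : init_word (shiftn (N + 2 * p) y) N = skipn (2 * p) (skipn N w0)).
  { rewrite (init_shift y w0) by (auto; lia). rewrite skipn_skipn.
    replace (2 * p + N)%nat with (N + 2 * p)%nat by lia.
    apply firstn_all2. rewrite length_skipn. lia. }
  set (e1 := Ew P phi N y). set (e2 := Ew P phi (2 * p) (shiftn N y)).
  set (e3 := Ew P phi N (shiftn (N + 2 * p) y)).
  assert (X1 : Ew P phi (N + (2 * p + N)) y = e1 * e2 * e3).
  { rewrite !Ew_add, Hsh. unfold e1, e2, e3. ring. }
  assert (X2 : Ew P phi (N + 2 * p) y = e1 * e2) by (rewrite Ew_add; reflexivity).
  assert (X3 : Ew P phi (2 * p + N) (shiftn N y) = e2 * e3) by (rewrite Ew_add, Hsh; reflexivity).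
  apply real_bound with (e1 := e1) (e2 := e2) (e3 := e3)
    (Md := mu (firstn (2 * p) (skipn N w0))); auto.
  - unfold e1; apply Ew_pos.
  - unfold e2; apply Ew_pos.
  - unfold e3; apply Ew_pos.
  - apply (ip_nonneg _ _ Hinv).
  - destruct (G y (N + (2 * p + N))%nat Hy) as [_ H]. rewrite W1, X1 in H. exact H.
  - destruct (G (shiftn N y) (2 * p)%nat (sft_shift _ _ _ _ Hy)) as [_ H]. rewrite W5 in H. exact H.
  - destruct (G y (N + 2 * p)%nat Hy) as [H _]. rewrite W2, X2 in H. exact H.
  - destruct (G (shiftn N y) (2 * p + N)%nat (sft_shift _ _ _ _ Hy)) as [H _]. rewrite W3, X3 in H. exact H.
  - destruct (G y N Hy) as [H _]. rewrite W4 in H. exact H.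
  - destruct (G (shiftn N y) (2 * p)%nat (sft_shift _ _ _ _ Hy)) as [H _]. rewrite W5 in H. exact H.
  - destruct (G (shiftn (N + 2 * p)%nat y) N (sft_shift _ _ _ _ Hy)) as [H _]. rewrite W6 in H. exact H.
Qed.

Lemma sum_first k mu N m : inv_prob k mu ->
  lsum (fun v => mu (firstn N v)) (words (N + m) k) = INR (length (words m k)).
Proof. intros Hinv. rewrite words_split.
  rewrite (lsum_ext_in _ (fun x => INR (length (words m k)) * mu x)).
  - rewrite lsum_scal, (words_sum k mu N Hinv). ring.
  - intros x Hx. apply words_length in Hx.
    rewrite (lsum_ext_in _ (fun _ => mu x)).
    + rewrite lsum_const. ring.
    + intros y _. rewrite firstn_app, firstn_all2 by lia.
      replace (N - length x)%nat with 0%nat by lia. simpl. rewrite app_nil_r. reflexivity.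
Qed.

Lemma sum_skip k mu N m : inv_prob k mu ->
  lsum (fun u => mu (skipn m u)) (words (N + m) k) = INR (length (words m k)).
Proof. intros Hinv. replace (N + m)%nat with (m + N)%nat by lia. rewrite words_split.
  rewrite (lsum_ext_in _ (fun x => 1)).
  - rewrite lsum_const. ring.
  - intros x Hx. apply words_length in Hx.
    rewrite <- (words_sum k mu N Hinv). apply lsum_ext_in. intros y _.
    rewrite skipn_app, skipn_all2 by lia. replace (m - length x)%nat with 0%nat by lia.
    reflexivity.
Qed.

Theorem mainTheorem13 :
  forall (k : nat) (forb : list (list nat)) (mu : list nat -> R),
    top_mixing (SFT k forb) ->
    Gibbs_measure k (SFT k forb) mu ->
    forall p : nat,
      exists M : R, forall N : nat, (1 <= N)%nat ->
        mutual_info k mu (- Z.of_nat p)%Z (N + 2 * p)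
                         (- Z.of_nat N - Z.of_nat p)%Z (N + 2 * p) <= M.
Proof.
  intros k forb mu _ [Hinv [Hsupp [phi [_ [P [K [HK HG]]]]]]] p.
  set (L := INR (length (words (2 * p) k))).
  exists ((Rmax K 1) ^ 8 * L * L).
  intros N _. unfold mutual_info.
  apply Rle_trans with (lsum (fun u => ((Rmax K 1) ^ 8 * mu (skipn (2 * p) u)) *
     lsum (fun v => mu (firstn N v)) (words (N + 2 * p) k)) (words (N + 2 * p) k)).
  { apply lsum_le_in; intros u Hu. rewrite <- lsum_scal. apply lsum_le_in; intros v Hv.
    eapply Rle_trans; [eapply term_bound; eauto|]. right; ring. }
  rewrite sum_first by auto. fold L.
  rewrite (lsum_ext_in _ (fun u => ((Rmax K 1) ^ 8 * L) * mu (skipn (2 * p) u)))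
    by (intros; ring).
  rewrite lsum_scal, sum_skip by auto. fold L. right; ring.
Qed.
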